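(* Let $(\mathfrak{g},[\cdot,\cdot],\langle\cdot,\cdot\rangle)$ be a nilpotent quadratic Lie algebra of dimension $n$. If $\mathfrak{g}$ admits an $(n-1)$-symplectic structure, then $\mathfrak{g}$ is abelian.
   Context: A quadratic Lie algebra is a finite-dimensional real Lie algebra $\mathfrak{g}$ endowed with a nondegenerate symmetric bilinear form $\langle\cdot,\cdot\rangle$ which is invariant: $\langle [u,v],w\rangle+\langle [u,w],v\rangle=0$ for all $u,v,w\in\mathfrak{g}$. A $k$-symplectic structure on a real Lie algebra $\mathfrak{g}$ of dimension $m(k+1)$ ($m,k\ge1$) is a pair consisting of a Lie subalgebra $\mathfrak{h}\subset\mathfrak{g}$ of dimension $mk$ and a family $(\theta_1,\dots,\theta_k)$ of skew-symmetric bilinear forms on $\mathfrak{g}$ such that: (i) $\bigcap_{i=1}^k\ker\theta_i=\{0\}$, where $\ker\theta_i=\{u\in\mathfrak{g}:\theta_i(u,v)=0\ \forall v\in\mathfrak{g}\}$; (ii) each $\theta_i$ is a 2-cocycle: $\theta_i([u,v],w)+\theta_i([v,w],u)+\theta_i([w,u],v)=0$ for all $u,v,w$; (iii) $\theta_i(u,v)=0$ for all $u,v\in\mathfrak{h}$ and all $i$. (Thus an $(n-1)$-symplectic structure on an $n$-dimensional Lie algebra has $\dim\mathfrak{h}=n-1$.) *)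

(* Defs.v *)
From HB Require Import structures.
From mathcomp Require Import all_boot all_order all_algebra.
From mathcomp Require Import reals.
Set Implicit Arguments. Unset Strict Implicit. Unset Printing Implicit Defensive.
Import Order.TTheory GRing.Theory Num.Theory.
Local Open Scope ring_scope.

Section Lie.
Variables (R : realType) (V : vectType R).

Definition lie_bracket (br : V -> V -> V) : Prop :=
  [/\ (forall (a : R) u v w, br (a *: u + v) w = a *: br u w + br v w),
      (forall (a : R) u v w, br u (a *: v + w) = a *: br u v + br u w),
      (forall u, br u u = 0) &
      (forall u v w, br u (br v w) + br v (br w u) + br w (br u v) = 0)].

Definition bilinear_form (B : V -> V -> R) : Prop :=
  (forall (a : R) u v w, B (a *: u + v) w = a * B u w + B v w) /\
  (forall (a : R) u v w, B u (a *: v + w) = a * B u v + B u w).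

Definition quadratic (br : V -> V -> V) (B : V -> V -> R) : Prop :=
  [/\ bilinear_form B,
      (forall u v, B u v = B v u),
      (forall u, (forall v, B u v = 0) -> u = 0) &
      (forall u v w, B (br u v) w + B (br u w) v = 0)].

Definition bracket_space (br : V -> V -> V) (U W : {vspace V}) : {vspace V} :=
  <<[seq br u w | u <- vbasis U, w <- vbasis W]>>%VS.

Definition lower_central (br : V -> V -> V) (k : nat) : {vspace V} :=
  iter k (bracket_space br fullv) fullv.

Definition nilpotent (br : V -> V -> V) : Prop :=
  exists N, lower_central br N = 0%VS.

Definition abelian (br : V -> V -> V) : Prop := forall u v, br u v = 0.

Definition subalgebra (br : V -> V -> V) (h : {vspace V}) : Prop :=
  forall u v, u \in h -> v \in h -> br u v \in h.

Definition k_symplectic_structure (br : V -> V -> V) (m k : nat)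
    (h : {vspace V}) (theta : 'I_k -> V -> V -> R) : Prop :=
  [/\ [/\ (1 <= m)%N, (1 <= k)%N & \dim (fullv : {vspace V}) = (m * k.+1)%N],
      subalgebra br h /\ \dim h = (m * k)%N,
      (forall i, bilinear_form (theta i) /\ forall u v, theta i u v = - theta i v u),
      (forall u, (forall i v, theta i u v = 0) -> u = 0) /\
      (forall i u v w,
          theta i (br u v) w + theta i (br v w) u + theta i (br w u) v = 0) &
      (forall i u v, u \in h -> v \in h -> theta i u v = 0)].

Definition admits_k_symplectic (br : V -> V -> V) (k : nat) : Prop :=
  exists m h theta, @k_symplectic_structure br m k h theta.

End Lie.

(* Main.v *)
Require Import Defs.
From HB Require Import structures.
From mathcomp Require Import all_boot all_order all_algebra.
From mathcomp Require Import reals.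
From mathcomp Require Import ring lra zify.
From Stdlib Require Import Classical.
Local Open Scope ring_scope.
Import GRing.Theory Num.Theory.
Set Implicit Arguments. Unset Strict Implicit.

Section Helpers.
Lemma lin0 (K : fieldType) (U : lmodType K) (W : lmodType K) (f : U -> W) :
  (forall a u v, f (a *: u + v) = a *: f u + f v) -> f 0 = 0.
Proof.
move=> hf; have := hf 1 0 0; rewrite !scale1r addr0 => /(congr1 (fun x => x - f 0)).
by rewrite subrr addrK => ->.
Qed.
Lemma linD (K : fieldType) (U : lmodType K) (W : lmodType K) (f : U -> W) :
  (forall a u v, f (a *: u + v) = a *: f u + f v) -> forall u v, f (u + v) = f u + f v.
Proof. by move=> hf u v; rewrite -[u]scale1r hf !scale1r. Qed.
Lemma linZ (K : fieldType) (U : lmodType K) (W : lmodType K) (f : U -> W) :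
  (forall a u v, f (a *: u + v) = a *: f u + f v) -> forall a u, f (a *: u) = a *: f u.
Proof. by move=> hf a u; rewrite -[a *: u]addr0 hf (lin0 hf) addr0. Qed.
Lemma linN (K : fieldType) (U : lmodType K) (W : lmodType K) (f : U -> W) :
  (forall a u v, f (a *: u + v) = a *: f u + f v) -> forall u, f (- u) = - f u.
Proof. by move=> hf u; rewrite -scaleN1r (linZ hf) scaleN1r. Qed.
End Helpers.
Unset Implicit Arguments.

Theorem mainTheorem3 (R : realType) (V : vectType R) (br : V -> V -> V)
    (B : V -> V -> R) (n : nat) :
  lie_bracket br -> quadratic br B -> nilpotent br ->
  \dim (fullv : {vspace V}) = n ->
  admits_k_symplectic br n.-1 ->
  abelian br.
Proof.
move=> [brL brR brA brJ] [[BL BR] Bsym Bnd Binv] [N HN] dimV.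
move=> [m [h [th [[m1 k1 dimV'] [hsub dimh] thlin [thnd thcoc] thh]]]].
have bL : forall w, forall a u v, br (a *: u + v) w = a *: br u w + br v w by move=> w a u v; apply: brL.
have bR : forall u, forall a v w, br u (a *: v + w) = a *: br u v + br u w by move=> u a v w; apply: brR.
have BLw : forall w, forall a u v, (B (a *: u + v) w : R^o) = a *: (B u w : R^o) + B v w.
  by move=> w a u v; apply: BL.
have BRu : forall u, forall a v w, (B u (a *: v + w) : R^o) = a *: (B u v : R^o) + B u w.
  by move=> u a v w; apply: BR.

have br0l : forall w, br 0 w = 0 by move=> w; exact: (lin0 (bL w)).
have br0r : forall u, br u 0 = 0 by move=> u; exact: (lin0 (bR u)).
have brDl : forall w u v, br (u + v) w = br u w + br v w by move=> w; exact: (linD (bL w)).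
have brDr : forall u v w, br u (v + w) = br u v + br u w by move=> u; exact: (linD (bR u)).
have brZl : forall w a u, br (a *: u) w = a *: br u w by move=> w; exact: (linZ (bL w)).
have brZr : forall u a v, br u (a *: v) = a *: br u v by move=> u; exact: (linZ (bR u)).
have brN : forall u v, br u v = - br v u.
  move=> u v; have := brA (u + v); rewrite brDl !brDr !brA add0r addr0.
  by move/eqP; rewrite addr_eq0 => /eqP.
have brmem : forall (W : {vspace V}) u w, w \in W -> br u w \in bracket_space br fullv W.
  move=> W u w hw; rewrite (coord_vbasis (memvf u)) (coord_vbasis hw).
  rewrite (big_morph (fun x => br x _) (brDl _) (br0l _)).
  apply: memv_suml => i _; rewrite brZl; apply: memvZ.
  rewrite (big_morph (fun x => br _ x) (brDr _) (br0r _)).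
  apply: memv_suml => j _; rewrite brZr; apply: memvZ.
  apply: memv_span; apply: allpairs_f; apply: mem_nth; by rewrite size_tuple.
have nilz : forall y w c, c != 0 -> br y w = c *: w -> w = 0.
  move=> y w c c0 hyw.
  have : forall k, w \in lower_central br k.
    elim=> [|k IH]; first exact: memvf.
    have -> : w = br y (c^-1 *: w) by rewrite brZr hyw scalerA mulVf // scale1r.
    by apply: brmem; apply: memvZ.
  by move=> /(_ N); rewrite HN memv0 => /eqP.

have dimh' : \dim h = n.-1.
  rewrite dimh; have hn : n.-1.+1 = n by lia.
  rewrite hn in dimV'; rewrite dimV in dimV'.
  have : m = 1%N by nia.
  by move=> ->; rewrite mul1n.
have [e he] : exists e, e \notin h.
  apply: NNPP => H.
  have : (fullv <= h)%VS.
    apply/subvP => v _; apply/negPn/negP => hv; apply: H; by exists v.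
  move/dimvS; rewrite dimV dimh'; lia.
have hfull : (h + <[e]>)%VS = fullv.
  apply/eqP; rewrite eqEdim subvf /= dimV.
  have hS : (h <= h + <[e]>)%VS by apply: addvSl.
  have hne : h != (h + <[e]>)%VS.
    apply/eqP => E; move: he; rewrite E; apply/negP/negPn.
    apply: subvP (addvSr h <[e]>) _ _; exact: memv_line.
  move: hne; rewrite eqEdim hS /= dimh' -ltnNge.
  have : (\dim (h + <[e]>) <= n)%N by rewrite -dimV; apply: dimvS; apply: subvf.
  lia.
have hdec : forall v, exists t, v - t *: e \in h.
  move=> v; have : v \in (h + <[e]>)%VS by rewrite hfull memvf.
  case/memv_addP => p hp [q /vlineP [t ->] ->].
  by exists t; rewrite addrK.

have thL : forall i w a u v, (th i (a *: u + v) w : R^o) = a *: (th i u w : R^o) + th i v w.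
  by move=> i w a u v; case: (thlin i) => [[L _] _]; apply: L.
have thR : forall i u a v w, (th i u (a *: v + w) : R^o) = a *: (th i u v : R^o) + th i u w.
  by move=> i u a v w; case: (thlin i) => [[_ Rr] _]; apply: Rr.
have thA : forall i u v, th i u v = - th i v u by move=> i; case: (thlin i).
have the : forall i w v, w \in h -> th i w e = 0 -> th i w v = 0.
  move=> i w v hw h0; have [t ht] := hdec v.
  have -> : v = t *: e + (v - t *: e) by rewrite addrC subrK.
  by rewrite thR h0 (thh i w _ hw ht) [_ *: _]mulr0 addr0.
have key : forall y z c d, y \in h -> z \in h -> br e y - c *: e \in h ->
    br e z - d *: e \in h -> br y z = c *: z - d *: y.
  move=> y z c d hy hz hc hd.
  set w := br y z - (c *: z - d *: y).
  have hw : w \in h.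
    by rewrite memvB ?hsub // memvB // memvZ.
  suff : w = 0 by move/eqP; rewrite subr_eq0 => /eqP.
  apply: thnd => i v; apply: the => //.
  have hcoc := thcoc i e y z.
  have E1 : th i (br e y) z = c * th i e z.
    have -> : br e y = c *: e + (br e y - c *: e) by rewrite addrC subrK.
    by rewrite thL (thh i _ _ hc hz) addr0.
  have E2 : th i (br z e) y = - (d * th i e y).
    rewrite brN.
    have -> : br e z = d *: e + (br e z - d *: e) by rewrite addrC subrK.
    have thNl : forall u, th i (- u) y = - th i u y.
      by move=> u; exact: (linN (thL i y)).
    by rewrite thNl thL (thh i _ _ hd hy) addr0.
  have tD : forall u v, th i (u + v) e = th i u e + th i v e by exact: (linD (thL i e)).
  have tN : forall u, th i (- u) e = - th i u e by exact: (linN (thL i e)).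
  have tZ : forall a u, th i (a *: u) e = a * th i u e by exact: (linZ (thL i e)).
  rewrite /w tD tN tD tN !tZ.
  rewrite E1 E2 (thA i e z) (thA i e y) in hcoc.
  move: hcoc; set X := th i z e; set Y := th i y e; set Q := th i (br y z) e.
  move=> hcoc; nra.

have habel : forall y z, y \in h -> z \in h -> br y z = 0.
  move=> y z hy hz.
  have [c hc] := hdec (br e y); have [d hd] := hdec (br e z).
  have E := key y z c d hy hz hc hd.
  have [c0|c0] := eqVneq c 0.
    have [d0|d0] := eqVneq d 0.
      by rewrite E c0 d0 !scale0r subrr.
    have : y = 0.
      apply: (nilz z y d d0); rewrite brN E c0 scale0r sub0r opprK //.
    by move=> ->; rewrite br0l.
  have : c *: z - d *: y = 0.
    apply: (nilz y _ c c0).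
    by rewrite brDr brZr (linN (bR y)) brZr brA scaler0 oppr0 addr0 E.
  by rewrite -E.
have hxe : forall x, x \in h -> br x e = 0.
  move=> x hx; apply: Bnd => v.
  have [t ht] := hdec v.
  have -> : v = t *: e + (v - t *: e) by rewrite addrC subrK.
  have BD : forall u w, B (br x e) (u + w) = B (br x e) u + B (br x e) w.
    by move=> u w; exact: (linD (BRu (br x e))).
  have BZ : forall a u, B (br x e) (a *: u) = a * B (br x e) u.
    by move=> a u; exact: (linZ (BRu (br x e))).
  have B0 : forall w, B 0 w = 0 by move=> w; exact: (lin0 (BLw w)).
  have h1 := Binv x e (v - t *: e).
  rewrite (habel _ _ hx ht) B0 addr0 in h1.
  have h2 := Binv x e e.
  rewrite BD BZ h1 addr0.
  have -> : B (br x e) e = 0 by lra.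
  by rewrite mulr0.
move=> u v.
have [s hs] := hdec u; have [t ht] := hdec v.
have -> : u = s *: e + (u - s *: e) by rewrite addrC subrK.
have -> : v = t *: e + (v - t *: e) by rewrite addrC subrK.
move: hs ht; set p := u - s *: e; set q := v - t *: e => hs ht.
clearbody p q.
rewrite brDl !brDr !brZl !brZr brA (hxe _ hs) (brN e q) (hxe _ ht) (habel _ _ hs ht).
by rewrite oppr0 !scaler0 !addr0.
Qed.
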